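(* In the fixed-flow two-parallel-path setting, for every integer $t\ge L$, $$\frac{b_{d_1d}(t-m+1)}{b_{d_2d}(t-n+1)}\;\ge\;\min\big(r_{d_1d}(t-m+1),\,r_{d_1d}(t-n+1)\big)\;\ge\; r_{\min}(t).$$
   Context: Model (linear decision rule). Directed graph $G=(V,E)$, source $s$, destination $d$, discrete time; pheromone $p_{uv}(t)$, forward flows $f_v(t)$, backward flows $b_v(t)$; leakages $l_v\in[0,1]$; decay $\delta\in(0,1)$; exogenous inputs $f_s(t),b_d(t)$. Edge flows: $f_{uv}(t)=f_u(t)p_{uv}(t)/\sum_{z:(u,z)\in E}p_{uz}(t)$, $b_{uv}(t)=b_v(t)p_{uv}(t)/\sum_{z:(z,v)\in E}p_{zv}(t)$ (at a vertex with a single outgoing, resp. incoming, edge the whole flow goes along it). Updates: $f_v(t+1)=(1-l_v)\sum_{z:(z,v)\in E}f_{zv}(t)$ for $v\neq s$, $b_u(t+1)=(1-l_u)\sum_{z:(u,z)\in E}b_{uz}(t)$ for $u\ne d$, $p_{uv}(t+1)=\delta(p_{uv}(t)+f_{uv}(t)+b_{uv}(t))$. Two parallel paths: $G$ is the union of directed paths $P_1,P_2$ from $s$ to $d$ sharing only $s,d$; $s_1,s_2$ are the successors of $s$ and $d_1,d_2$ the predecessors of $d$ on $P_1,P_2$; $m=\mathrm{len}(P_1)$, $n=\mathrm{len}(P_2)$ (numbers of edges), $L=\max(m,n)$. Potential: $r_{ss_1}(t)=p_{ss_1}(t)/p_{ss_2}(t)$, $r_{d_1d}(t)=p_{d_1d}(t)/p_{d_2d}(t)$,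 and for $t\ge L$, $r_{\min}(t)=\min\{r_{ss_1}(t-i),\,r_{d_1d}(t-i):0\le i\le L-1\}$. Fixed-flow setting: $f_s(t)=\bar f>0$ and $b_d(t)=\bar b>0$ for all $t$, and all initial pheromone levels $p_{uv}(0)$ are positive. *)

(* Defs.v *)
From Stdlib Require Import Reals Lra Lia.
Open Scope R_scope.

(* Two parallel paths P1 (side [true]) and P2 (side [false]) from s to d,
   with m = len P1, n = len P2 edges.  On side i the vertices are numbered
   0 .. len i, vertex 0 being s and vertex (len i) being d; edge (i,k),
   k < len i, goes from vertex k to vertex k+1 of side i.  Internal vertices
   are (i,k) with 1 <= k <= len i - 1.  So s_1 = (true,1), d_1 = (true,m-1),
   edge s s_1 = (true,0), edge d_1 d = (true, m-1), and likewise for P2. *)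

Definition plen (m n : nat) (i : bool) : nat := if i then m else n.


Definition fedge (m n : nat) (fbar : R) (p f : bool -> nat -> nat -> R) (i : bool) (k t : nat) : R :=
  if Nat.eqb k 0%nat
  then fbar * p i 0%nat t / (p true 0%nat t + p false 0%nat t)   (* u = s, f_s(t) = fbar *)
  else f i k t.                                       (* single outgoing edge *)

Definition bedge (m n : nat) (bbar : R) (p b : bool -> nat -> nat -> R) (i : bool) (k t : nat) : R :=
  if Nat.eqb k (plen m n i - 1)%nat
  then bbar * p i k t / (p true (m - 1)%nat t + p false (n - 1)%nat t) (* v = d, b_d(t) = bbar *)
  else b i (k + 1)%nat t.                                 (* single incoming edge *)

Definition fixed_flow_two_paths (m n : nat) (delta fbar bbar : R)
  (l : bool -> nat -> R) (ls ld : R)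
  (p f b : bool -> nat -> nat -> R) (fd bs : nat -> R) : Prop :=
  0 < delta < 1 /\ 0 < fbar /\ 0 < bbar /\
  0 <= ls <= 1 /\ 0 <= ld <= 1 /\
  (forall i k, (1 <= k <= plen m n i - 1)%nat -> 0 <= l i k <= 1) /\
  (forall i k, (k < plen m n i)%nat -> 0 < p i k 0%nat) /\
  (forall i k, (1 <= k <= plen m n i - 1)%nat -> 0 <= f i k 0%nat /\ 0 <= b i k 0%nat) /\
  0 <= fd 0%nat /\ 0 <= bs 0%nat /\
  (forall i k t, (1 <= k <= plen m n i - 1)%nat ->
     f i k (S t) = (1 - l i k) * fedge m n fbar p f i (k - 1)%nat t) /\
  (forall t, fd (S t) = (1 - ld) *
     (fedge m n fbar p f true (m - 1)%nat t + fedge m n fbar p f false (n - 1)%nat t)) /\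
  (forall i k t, (1 <= k <= plen m n i - 1)%nat ->
     b i k (S t) = (1 - l i k) * bedge m n bbar p b i k t) /\
  (forall t, bs (S t) = (1 - ls) *
     (bedge m n bbar p b true 0%nat t + bedge m n bbar p b false 0%nat t)) /\
  (forall i k t, (k < plen m n i)%nat ->
     p i k (S t) = delta * (p i k t + fedge m n fbar p f i k t
                                    + bedge m n bbar p b i k t)).

Definition r_ss1 (p : bool -> nat -> nat -> R) (t : nat) : R :=
  p true 0%nat t / p false 0%nat t.

Definition r_d1d (m n : nat) (p : bool -> nat -> nat -> R) (t : nat) : R :=
  p true (m - 1)%nat t / p false (n - 1)%nat t.

Fixpoint min_upto (g : nat -> R) (k : nat) : R :=
  match k with
  | O => g O
  | S k' => Rmin (min_upto g k') (g k)
  end.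

Definition r_min (m n : nat) (p : bool -> nat -> nat -> R) (t : nat) : R :=
  min_upto (fun i => Rmin (r_ss1 p (t - i)) (r_d1d m n p (t - i)))
           (Nat.max m n - 1).

(* Main.v *)
Require Import Defs.
From Stdlib Require Import Reals Lra Lia.
Open Scope R_scope.

Lemma plen_pos m n i : (1 <= m)%nat -> (1 <= n)%nat -> (1 <= plen m n i)%nat.
Proof. destruct i; simpl; lia. Qed.

Lemma inv_all (m n : nat) (hm : (1 <= m)%nat) (hn : (1 <= n)%nat)
  delta fbar bbar l ls ld p f b fd bs :
  fixed_flow_two_paths m n delta fbar bbar l ls ld p f b fd bs ->
  forall t, (forall i k, (k < plen m n i)%nat -> 0 < p i k t) /\
            (forall i k, (1 <= k <= plen m n i - 1)%nat -> 0 <= f i k t /\ 0 <= b i k t).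
Proof.
  intros H.
  destruct H as (Hd & Hf & Hb & _ & _ & Hl & Hp0 & Hfb0 & _ & _ & Hfu & _ & Hbu & _ & Hpu).
  induction t as [|t [IHp IHfb]].
  - split; auto.
  - assert (Hsum0 : 0 < p true 0%nat t + p false 0%nat t).
    { assert (0 < p true 0%nat t) by (apply IHp; simpl; lia).
      assert (0 < p false 0%nat t) by (apply IHp; simpl; lia). lra. }
    assert (Hsum1 : 0 < p true (m-1)%nat t + p false (n-1)%nat t).
    { assert (0 < p true (m-1)%nat t) by (apply IHp; simpl; lia).
      assert (0 < p false (n-1)%nat t) by (apply IHp; simpl; lia). lra. }
    assert (HF : forall i k, (k < plen m n i)%nat -> 0 <= fedge m n fbar p f i k t).
    { intros i k Hk. unfold fedge. destruct (Nat.eqb_spec k 0).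
      - subst. apply Rmult_le_pos.
        + apply Rmult_le_pos; [lra| apply Rlt_le, IHp; auto].
        + apply Rlt_le, Rinv_0_lt_compat; auto.
      - apply (IHfb i k). lia. }
    assert (HB : forall i k, (k < plen m n i)%nat -> 0 <= bedge m n bbar p b i k t).
    { intros i k Hk. unfold bedge. destruct (Nat.eqb_spec k (plen m n i - 1)).
      - apply Rmult_le_pos.
        + apply Rmult_le_pos; [lra| apply Rlt_le, IHp; auto].
        + apply Rlt_le, Rinv_0_lt_compat; auto.
      - apply (IHfb i (k+1)%nat). lia. }
    split.
    + intros i k Hk. rewrite Hpu by auto.
      specialize (IHp i k Hk). specialize (HF i k Hk). specialize (HB i k Hk).
      apply Rmult_lt_0_compat; lra.
    + intros i k Hk. rewrite Hfu, Hbu by auto.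
      specialize (Hl i k Hk).
      assert (0 <= 1 - l i k) by lra.
      split; apply Rmult_le_pos; auto.
      * apply HF. lia.
      * apply HB. lia.
Qed.

Lemma min_upto_le g k i : (i <= k)%nat -> min_upto g k <= g i.
Proof.
  induction k; intros Hi.
  - replace i with 0%nat by lia. simpl; lra.
  - simpl. destruct (Nat.eq_dec i (S k)).
    + subst. apply Rmin_r.
    + eapply Rle_trans; [apply Rmin_l| apply IHk; lia].
Qed.

Theorem mainTheorem6 (m n : nat) (hm : (1 <= m)%nat) (hn : (1 <= n)%nat)
  (hsimple : ~ (m = 1%nat /\ n = 1%nat))
  (delta fbar bbar : R) (l : bool -> nat -> R) (ls ld : R)
  (p f b : bool -> nat -> nat -> R) (fd bs : nat -> R)
  (Hdyn : fixed_flow_two_paths m n delta fbar bbar l ls ld p f b fd bs)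
  (t : nat) (ht : (Nat.max m n <= t)%nat) :
  bedge m n bbar p b true (m - 1) (t - m + 1)
    / bedge m n bbar p b false (n - 1) (t - n + 1)
  >= Rmin (r_d1d m n p (t - m + 1)) (r_d1d m n p (t - n + 1))
  /\ Rmin (r_d1d m n p (t - m + 1)) (r_d1d m n p (t - n + 1))
  >= r_min m n p t.
Proof.
  pose proof (inv_all m n hm hn _ _ _ _ _ _ _ _ _ _ _ Hdyn) as Hinv.
  assert (Hbb : 0 < bbar) by (destruct Hdyn as (_ & _ & Hb & _); auto).
  split.
  - set (T := (t - m + 1)%nat). set (T' := (t - n + 1)%nat).
    unfold bedge. simpl.
    rewrite (proj2 (Nat.eqb_eq (m-1) (m-1)) eq_refl).
    rewrite (proj2 (Nat.eqb_eq (n-1) (n-1)) eq_refl).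
    unfold r_d1d.
    assert (a1 : 0 < p true (m-1)%nat T) by (apply (proj1 (Hinv T)); simpl; lia).
    assert (a2 : 0 < p false (n-1)%nat T) by (apply (proj1 (Hinv T)); simpl; lia).
    assert (c1 : 0 < p true (m-1)%nat T') by (apply (proj1 (Hinv T')); simpl; lia).
    assert (c2 : 0 < p false (n-1)%nat T') by (apply (proj1 (Hinv T')); simpl; lia).
    set (x1 := p true (m-1)%nat T) in *. set (x2 := p false (n-1)%nat T) in *.
    set (y1 := p true (m-1)%nat T') in *. set (y2 := p false (n-1)%nat T') in *.
    set (r := x1 / x2). set (r' := y1 / y2).
    assert (Hr : x1 = r * x2) by (unfold r; field; lra).
    assert (Hr' : y1 = r' * y2) by (unfold r'; field; lra).
    assert (rpos : 0 < r) by (unfold r; apply Rdiv_lt_0_compat; auto).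
    assert (rpos' : 0 < r') by (unfold r'; apply Rdiv_lt_0_compat; auto).
    assert (E : bbar * x1 / (x1 + x2) / (bbar * y2 / (y1 + y2)) = r * (1 + r') / (1 + r)).
    { rewrite Hr, Hr'. field. repeat split; nra. }
    rewrite E.
    apply Rle_ge.
    destruct (Rle_dec r r').
    + eapply Rle_trans; [apply Rmin_l|].
      apply (Rmult_le_reg_r (1 + r)); [lra|].
      unfold Rdiv. rewrite Rmult_assoc, Rinv_l by lra. nra.
    + eapply Rle_trans; [apply Rmin_r|].
      apply (Rmult_le_reg_r (1 + r)); [lra|].
      unfold Rdiv. rewrite Rmult_assoc, Rinv_l by lra. nra.
  - unfold r_min. apply Rle_ge. apply Rmin_glb.
    + replace (t - m + 1)%nat with (t - (m - 1))%nat by lia.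
      eapply Rle_trans; [apply (min_upto_le _ _ (m-1)%nat); lia|].
      apply Rmin_r.
    + replace (t - n + 1)%nat with (t - (n - 1))%nat by lia.
      eapply Rle_trans; [apply (min_upto_le _ _ (n-1)%nat); lia|].
      apply Rmin_r.
Qed.
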